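(* There exist $d\ge1$, $\mu\in\mathbb{R}^d$, a symmetric positive semidefinite $\Sigma\in\mathbb{R}^{d\times d}$, $c\in\mathbb{R}^d$ with $c_f>0$, $\alpha>0$ and $\delta\in(0,1/2)$ such that the problem $$\min_{e\in\mathbb{R}^d}\ \sum_f c_f|e_f|\quad\text{s.t.}\quad \alpha-\mu^\top e-\Phi^{-1}(\delta)\,\|\Sigma^{1/2}e\|_2\le0$$ has an optimal solution, and every optimal solution has at least two nonzero coordinates (i.e. the agent must invest effort into more than one feature).
   Context: $\Phi$ is the standard normal CDF. The constraint is equivalent to $\mathbb{P}_{Z\sim\mathcal{N}(\mu,\Sigma)}[Z^\top e\ge\alpha]\ge1-\delta$, where $Z$ represents the agent's Gaussian belief about the vector $\mathbb{C}h$ of total feature contributions under partially incomplete information; the objective is the weighted $\ell_1$ cost of effort. *)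

(* Defs.v *)
From HB Require Import structures.
From mathcomp Require Import all_boot all_order all_algebra.
From mathcomp Require Import all_classical all_reals all_analysis.
From mathcomp Require Import normal_distribution.
Set Implicit Arguments. Unset Strict Implicit. Unset Printing Implicit Defensive.
Import Order.TTheory GRing.Theory Num.Theory.
Local Open Scope ring_scope.
Local Open Scope classical_set_scope.

Definition Phi (R : realType) (x : R) : R :=
  fine (normal_prob (0:R) 1 `]-oo, x]).

Definition psd (R : realType) (d : nat) (A : 'M[R]_d) : Prop :=
  A^T = A /\ forall v : 'cV[R]_d, 0 <= (v^T *m A *m v) 0 0.

Definition is_psd_sqrt (R : realType) (d : nat) (S Sigma : 'M[R]_d) : Prop :=
  psd S /\ S *m S = Sigma.

Definition norm2 (R : realType) (d : nat) (v : 'cV[R]_d) : R :=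
  Num.sqrt (\sum_i (v i 0) ^+ 2).

Definition cost (R : realType) (d : nat) (c e : 'cV[R]_d) : R :=
  \sum_i c i 0 * `|e i 0|.

(* Chance constraint alpha - mu^T e - q ||S e||_2 <= 0, with q = Phi^{-1}(delta). *)
Definition feasible (R : realType) (d : nat) (mu : 'cV[R]_d) (S : 'M[R]_d)
  (alpha q : R) (e : 'cV[R]_d) : Prop :=
  alpha - (mu^T *m e) 0 0 - q * norm2 (S *m e) <= 0.

Definition optimal (R : realType) (d : nat) (mu : 'cV[R]_d) (S : 'M[R]_d)
  (c : 'cV[R]_d) (alpha q : R) (e : 'cV[R]_d) : Prop :=
  feasible mu S alpha q e /\
  forall e' : 'cV[R]_d, feasible mu S alpha q e' -> cost c e <= cost c e'.

(* Main.v *)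
Require Import Defs.
From HB Require Import structures.
From mathcomp Require Import all_boot all_order all_algebra.
From mathcomp Require Import all_classical all_reals all_analysis.
From mathcomp Require Import normal_distribution.
From mathcomp Require Import lra ring measurable_realfun.
Import Order.TTheory GRing.Theory Num.Theory.
Local Open Scope ring_scope.

Section S.
Variable R : realType.
Notation P := (normal_prob (0:R) 1).

Lemma pdf_lb (x M : R) : x ^+ 2 <= M ->
  normal_peak (1:R) * (1 - M / 2) <= normal_pdf 0 1 x.
Proof.
move=> hx; rewrite normal_pdfE ?oner_neq0 //.
apply: ler_wpM2l; first exact: normal_peak_ge0.
rewrite /normal_fun subr0 expr1n.

apply: le_trans (expR_ge1Dx _).
rewrite mulNr lerD2l lerN2; lra.
Qed.

Lemma piece (a b M : R) : a <= b -> M <= 2 ->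
  (forall x, a <= x <= b -> x ^+ 2 <= M) ->
  (((normal_peak (1:R) * (1 - M / 2)) * (b - a))%:E <= P `]a, b])%E.
Proof.
move=> ab M2 hM.
have c0 : 0 <= normal_peak (1:R) * (1 - M / 2).
  by rewrite mulr_ge0 ?normal_peak_ge0 //; lra.
rewrite /normal_prob.
have H : (((normal_peak (1:R) * (1 - M / 2)) * (b - a))%:E <= \int[lebesgue_measure]_(x in `]a, b]) (cst (normal_peak (1:R) * (1 - M / 2))%:E x))%E.
  rewrite integral_cst //= lebesgue_measure_itv /=.
  case: ifPn => [_|].
    by rewrite -EFinM lee_fin.
  rewrite lte_fin -leNgt => ba.
  have -> : b - a = 0 by apply/eqP; rewrite subr_eq0 eq_le ba ab.
  by rewrite mulr0 mule0.
apply: (le_trans H).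
apply: ge0_le_integral.
- by [].
- by move=> x _; rewrite lee_fin.
- exact: measurable_cst.
- apply/measurable_EFinP; apply: measurable_funTS; exact: measurable_normal_pdf.
- move=> x /=; rewrite in_itv /= => /andP [ax xb].
  rewrite lee_fin; apply: pdf_lb; apply: hM; rewrite xb andbT; exact: ltW.
Qed.

Lemma fin_P (A : set R) : measurable A -> P A \is a fin_num.
Proof.
move=> mA; rewrite ge0_fin_numE ?measure_ge0 //.
have h1 := @probability_le1 _ _ R (normal_prob (0:R) (1:R)) A mA.
by apply: (le_lt_trans h1); rewrite ltry.
Qed.

Lemma P_fin (A : set R) : measurable A -> P A = (fine (P A))%:E.
Proof. by move=> mA; rewrite fineK // fin_P. Qed.

Lemma Phi_ge0 (x : R) : 0 <= Phi x.
Proof. by rewrite /Phi fine_ge0 // measure_ge0. Qed.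

Lemma Phi_le1 (x : R) : Phi x <= 1.
Proof.
rewrite /Phi -lee_fin -P_fin //. exact: probability_le1.
Qed.

Lemma Phi_split (a b : R) : a <= b -> Phi b = Phi a + fine (P `]a, b]).
Proof.
move=> ab.
rewrite /Phi (itv_bndbnd_setU (x := BRight a)) ?bnd_simp //.
rewrite measureU //.
- by rewrite fineD //; apply: fin_P.
- by rewrite -subset0 => x [] /=; rewrite !in_itv /= => xa /andP [] ax; move: (lt_le_trans ax xa); rewrite ltxx.
Qed.

Lemma Phi_inc (a b M : R) : a <= b -> M <= 2 ->
  (forall x, a <= x <= b -> x ^+ 2 <= M) ->
  Phi a + normal_peak (1:R) * (1 - M / 2) * (b - a) <= Phi b.
Proof.
move=> ab M2 hM; rewrite (Phi_split _ _ ab) lerD2l -lee_fin -P_fin //.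
exact: piece.
Qed.

Lemma peak_gt : 27 / 80 < normal_peak (1:R).
Proof.
have [/andP [_ pi4] _] := pihalf_02_cos_pihalf R.
have pi0 := pi_gt0 R.
rewrite /normal_peak expr1n mul1r.
have s0 : 0 < Num.sqrt (pi *+ 2 : R) by rewrite sqrtr_gt0 pmulrn_lgt0.
have sl : Num.sqrt (pi *+ 2 : R) < 80 / 27.
  have -> : (80 / 27 : R) = Num.sqrt ((80 / 27) ^+ 2) by rewrite sqrtr_sqr ger0_norm.
  rewrite ltr_sqrt; last by apply: exprn_gt0.
  rewrite -mulr_natr; lra.
rewrite -(ltr_pM2r s0) mulVf ?gt_eqF //.
nra.
Qed.

Lemma Phi_m1_gt0 : 0 < Phi (-1 : R).
Proof.
have pk : 0 < normal_peak (1:R) by apply: normal_peak_gt0; rewrite oner_neq0.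
have := Phi_inc (-6/5) (-1) (3/2).
have := Phi_ge0 (-6/5).
move=> h0 h; have {h} := h ltac:(lra) ltac:(lra) ltac:(move=> x hx; nra).
nra.
Qed.

Lemma Phi_m1_lt0 : Phi (-1 : R) < Phi 0.
Proof.
have pk : 0 < normal_peak (1:R) by apply: normal_peak_gt0; rewrite oner_neq0.
have := Phi_inc (-1) (0) (1).
move=> h; have {h} := h ltac:(lra) ltac:(lra) ltac:(move=> x hx; nra).
nra.
Qed.

Lemma Phi_m1_lt_half : Phi (-1 : R) < 1 / 2.
Proof.
have pk := peak_gt.
have h1 := Phi_inc (-1) (-2/3) (1).
have h2 := Phi_inc (-2/3) (-1/3) (4/9).
have h3 := Phi_inc (-1/3) (0) (1/9).
have h4 := Phi_inc (0) (1/3) (1/9).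
have h5 := Phi_inc (1/3) (2/3) (4/9).
have h6 := Phi_inc (2/3) (1) (1).
have {h1} := h1 ltac:(lra) ltac:(lra) ltac:(move=> x hx; nra).
have {h2} := h2 ltac:(lra) ltac:(lra) ltac:(move=> x hx; nra).
have {h3} := h3 ltac:(lra) ltac:(lra) ltac:(move=> x hx; nra).
have {h4} := h4 ltac:(lra) ltac:(lra) ltac:(move=> x hx; nra).
have {h5} := h5 ltac:(lra) ltac:(lra) ltac:(move=> x hx; nra).
have {h6} := h6 ltac:(lra) ltac:(lra) ltac:(move=> x hx; nra).
have := Phi_le1 1.
lra.
Qed.

Lemma Phi_mono (a b : R) : a <= b -> Phi a <= Phi b.
Proof.
move=> ab; rewrite (Phi_split _ _ ab) lerDl fine_ge0 // measure_ge0 //.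
Qed.
End S.

Section M.
Variable R : realType.
Lemma sum2 (F : 'I_2 -> R) : \sum_(i < 2) F i = F ord0 + F ord_max.
Proof. rewrite big_ord_recr /= big_ord_recr /= big_ord0 add0r. by congr (F _ + _); apply: val_inj. Qed.

Definition Sig : 'M[R]_2 := \matrix_(i, j) (if i == j then 2 else -2).
Definition S0 : 'M[R]_2 := \matrix_(i, j) (if i == j then 1 else -1).

Lemma quad (v : 'cV[R]_2) : (v^T *m Sig *m v) 0 0 = 2 * (v ord0 0 - v ord_max 0) ^+ 2.
Proof.
rewrite !mxE sum2 !mxE !sum2 !mxE /=.
ring.
Qed.

Lemma quad0 (v : 'cV[R]_2) : (v^T *m S0 *m v) 0 0 = (v ord0 0 - v ord_max 0) ^+ 2.
Proof. rewrite !mxE sum2 !mxE !sum2 !mxE /=; ring. Qed.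

Lemma psd_Sig : psd Sig.
Proof.
split.
  by apply/matrixP => i j; rewrite !mxE eq_sym.
by move=> v; rewrite quad mulr_ge0 // sqr_ge0.
Qed.

Lemma psd_S0 : psd S0.
Proof.
split.
  by apply/matrixP => i j; rewrite !mxE eq_sym.
by move=> v; rewrite quad0 sqr_ge0.
Qed.

Lemma S0S0 : S0 *m S0 = Sig.
Proof.
apply/matrixP => i j; rewrite !mxE sum2 !mxE.
case: i => [[|[|i]] Hi] //; case: j => [[|[|j]] Hj] //=; ring.
Qed.

Lemma normS (S : 'M[R]_2) (e : 'cV[R]_2) : psd S -> S *m S = Sig ->
  norm2 (S *m e) = Num.sqrt (2 * (e ord0 0 - e ord_max 0) ^+ 2).
Proof.
move=> [ST _] SS; rewrite /norm2 -quad; congr Num.sqrt.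
have -> : e^T *m Sig *m e = (S *m e)^T *m (S *m e).
  by rewrite trmx_mul ST -SS !mulmxA.
by rewrite mxE; apply: eq_bigr => i _; rewrite !mxE expr2.
Qed.

Lemma muE (e : 'cV[R]_2) : ((const_mx 1 : 'cV[R]_2)^T *m e) 0 0 = e ord0 0 + e ord_max 0.
Proof. by rewrite mxE sum2 !mxE !mul1r. Qed.

Lemma costE (e : 'cV[R]_2) : cost (const_mx 1) e = `|e ord0 0| + `|e ord_max 0|.
Proof. by rewrite /cost sum2 !mxE !mul1r. Qed.
End M.

Theorem lemma6 (R : realType) :
  exists (d : nat) (mu : 'cV[R]_d) (Sigma : 'M[R]_d) (c : 'cV[R]_d)
         (alpha delta : R),
    [/\ (0 < d)%N, psd Sigma, (forall f, 0 < c f 0), 0 < alpha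
      & 0 < delta < 1/2] /\
    (exists S : 'M[R]_d, is_psd_sqrt S Sigma) /\ (exists q : R, Phi q = delta) /\
    forall (S : 'M[R]_d) (q : R), is_psd_sqrt S Sigma -> Phi q = delta ->
      (exists e, optimal mu S c alpha q e) /\
      (forall e, optimal mu S c alpha q e ->
         exists f g : 'I_d, [/\ f != g, e f 0 != 0 & e g 0 != 0]).
Proof.
exists 2%N, (const_mx 1), (Sig R), (const_mx 1), 1, (Phi (-1 : R)).
split.
  split => //.
  - exact: psd_Sig.
  - by move=> f; rewrite mxE ltr01.
  - by rewrite Phi_m1_gt0 Phi_m1_lt_half.
split.
  by exists (S0 R); split; [exact: psd_S0|exact: S0S0].
split.
  by exists (-1).
move=> S q [pS SS] Pq.
have q0 : q < 0.
  rewrite ltNge; apply/negP => q0.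
  have := @Phi_mono R 0 q q0; have := @Phi_m1_lt0 R; rewrite Pq; lra.
have fE (e : 'cV[R]_2) : feasible (const_mx 1) S 1 q e <->
    1 - (e ord0 0 + e ord_max 0) - q * Num.sqrt (2 * (e ord0 0 - e ord_max 0) ^+ 2) <= 0.
  by rewrite /feasible muE (@normS R S e pS SS).
have fs : feasible (const_mx 1) S 1 q (const_mx (1/2)).
  apply/fE; rewrite !mxE subrr expr0n /= mulr0 sqrtr0 mulr0; lra.
have lb (e : 'cV[R]_2) : feasible (const_mx 1) S 1 q e ->
    1 - q * Num.sqrt (2 * (e ord0 0 - e ord_max 0) ^+ 2) <= cost (const_mx 1) e.
  move/fE => h; rewrite costE.
  have h1 := ler_norm (e ord0 0); have h2 := ler_norm (e ord_max 0).
  lra.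
have cs : cost (const_mx 1) (const_mx (1/2) : 'cV[R]_2) = 1.
  rewrite costE !mxE ger0_norm; lra.
split.
  exists (const_mx (1/2)); split => // e' fe'.
  rewrite cs; have := lb _ fe'.
  have := sqrtr_ge0 (2 * (e' ord0 0 - e' ord_max 0) ^+ 2).
  set N := Num.sqrt _ => N0 h; nra.
move=> e [fe opt].
have := opt _ fs; rewrite cs => c1.
have := lb _ fe.
have := sqrtr_ge0 (2 * (e ord0 0 - e ord_max 0) ^+ 2).
set N := Num.sqrt _ => N0 h.
have N00 : N = 0 by nra.
move: N00; rewrite /N => /eqP; rewrite sqrtr_eq0 => hs.
have ee : e ord0 0 = e ord_max 0.
  apply/eqP; rewrite -subr_eq0 -sqrf_eq0 eq_le sqr_ge0 andbT; nra.
move/fE: fe; rewrite ee subrr expr0n /= mulr0 sqrtr0 mulr0 => fe.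
exists ord0, ord_max; split => //; apply/eqP; rewrite ?ee; lra.
Qed.
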